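(* For any $\alpha>0$ there exists $\beta_0>0$ such that the following holds for all $0<\beta\le\beta_0$. Let $\Lambda_1,\dots,\Lambda_m\subseteq\mathbb{R}^d$ be hyperplanes, let $b\in\bigcap_{i\in[m]}\Lambda_i$, and let $j$ be the smallest integer for which the set $V=\{v_1,\dots,v_m\}$ of their unit normal vectors is $(j,\beta^j)$-flat with respect to some $j$-plane $\Lambda_B$ with $b\in\Lambda_B$. If for some point $p$ the angle between $v=b-p$ and $\Lambda_i$ is at most $\beta^d$ for every $i\in[m]$, then the angle between $v$ and $\Lambda:=\Lambda_B(b)^{\perp}$ is at most $\alpha$.
   Context: A $j$-plane is an affine subspace of dimension $j$. The angle between a vector $v$ and a plane $\Lambda$ is the infimum of the angles between $v$ and vectors $w\in\Lambda-\Lambda$. A set of vectors $V$ is $(j,\alpha)$-flat with respect to a $j$-plane $\Lambda$ if every $v\in V$ makes angle at most $\alpha$ with $\Lambda$. For a $j$-plane $\gamma\subseteq\mathbb{R}^{d}$ and a point $p\in\gamma$, $\gamma(p)^{\perp}$ denotes the $(d-j)$-plane through $p$ orthogonal to $\gamma$. *)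

(* Defs.v *)
From HB Require Import structures.
From mathcomp Require Import all_boot all_order all_algebra.
From mathcomp Require Import all_classical all_reals.
From mathcomp Require Import ereal trigo.
Set Implicit Arguments. Unset Strict Implicit. Unset Printing Implicit Defensive.
Import Order.TTheory GRing.Theory Num.Theory.
Local Open Scope classical_set_scope.
Local Open Scope ring_scope.

Section Geometry.
Variables (R : realType) (d : nat).
Notation vec := 'rV[R]_d.

Definition dotv (u w : vec) : R := (u *m w^T) 0 0.
Definition normv (u : vec) : R := Num.sqrt (dotv u u).

Definition vec_angle (u w : vec) : R := acos (dotv u w / (normv u * normv w)).

Definition jplane (j : nat) (S : set vec) : Prop :=
  exists (a : vec) (W : 'M[R]_d),
    \rank W = j /\ S = [set x | (x - a <= W)%MS].

Definition diffset (S : set vec) : set vec :=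
  [set w | exists x y, S x /\ S y /\ w = x - y].

(* angle between a vector v and a plane S: infimum of the angles between v and
   the (nonzero) vectors w in S - S; +oo if there is no such w (S a point) *)
Definition angle_vp (v : vec) (S : set vec) : \bar R :=
  ereal_inf [set (vec_angle v w)%:E | w in [set w | diffset S w /\ w != 0]].

Definition flat_wrt {m : nat} (j : nat) (alpha : R) (V : 'I_m -> vec)
    (L : set vec) : Prop :=
  jplane j L /\ forall i, (angle_vp (V i) L <= alpha%:E)%E.

Definition perp_plane (S : set vec) (p : vec) : set vec :=
  [set x | forall u, diffset S u -> dotv (x - p) u = 0].

End Geometry.

(* Main.v *)
Require Import Defs.
From HB Require Import structures.
From mathcomp Require Import all_boot all_order all_algebra.
From mathcomp Require Import all_classical all_reals.
From mathcomp Require Import ereal trigo.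
From mathcomp Require Import topology normedtype derive.
From mathcomp Require Import ring lra zify.
Import Order.TTheory GRing.Theory Num.Theory.
Local Open Scope classical_set_scope.
Local Open Scope ring_scope.

Module Aux.
Import numFieldNormedType.Exports.
Section Trig.
Variable R : realType.
Set Implicit Arguments. Unset Strict Implicit.

Lemma sin_mvt (t : R) : 0 <= t -> exists2 c, 0 <= c <= t & sin t = cos c * t.
Proof.
move=> t0.
have H1 : forall x : R, x \in `]0, t[%R -> is_derive x 1 (@sin R) (cos x).
  by move=> x _; exact: is_derive_sin.
have H2 : {within `[0, t], continuous (@sin R)}.
  exact/continuous_subspaceT/continuous_sin.
have [c cI] := MVT_segment t0 H1 H2.
rewrite sin0 !subr0 => ->; exists c => //.
Qed.

Lemma one_sub_cos (y : R) : 1 - cos y = (sin (y / 2)) ^+ 2 *+ 2.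
Proof.
have {1}-> : y = (y / 2) *+ 2 by rewrite -mulr_natr divfK ?pnatr_eq0.
rewrite cos_mulr2n cos2sin2; ring.
Qed.

Lemma cos_anti (x y : R) : 0 <= x -> x <= y -> y <= pi -> cos y <= cos x.
Proof.
move=> x0 xy ypi; rewrite le_eqVlt in xy; case/predU1P: xy => [->//|xy].
apply/ltW; rewrite ltr_cos // in_itv /=; apply/andP; split => //.
- exact: (le_trans (ltW xy)).
- exact: (le_trans x0 (ltW xy)).
Qed.

Lemma cos_half_gt0 : 0 < cos (1/2 : R).
Proof.
apply: cos_gt0_pihalf; have := pihalf_ge1 R => h.
apply/andP; split; first by rewrite (lt_le_trans _ (_ : 0 <= 1/2)) // ?oppr_lt0 ?(lt_le_trans ltr01 h).
by apply: (lt_le_trans _ h); rewrite ltr_pdivrMr // mul1r ltr1n.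
Qed.

Lemma cos_ub (y : R) : 0 <= y -> 1 - cos y <= y ^+ 2 / 2.
Proof.
move=> y0; rewrite one_sub_cos.
have hy : 0 <= y / 2 by rewrite divr_ge0.
have [c _ ->] := sin_mvt hy.
have hc : cos c ^+ 2 <= 1 by rewrite -(cos2Dsin2 c) lerDl sqr_ge0.
have : (cos c * (y / 2)) ^+ 2 <= (y / 2) ^+ 2.
  by rewrite exprMn ler_piMl // sqr_ge0.
move=> h; apply: le_trans (_ : (y / 2) ^+ 2 *+ 2 <= _).
  by rewrite lerMn2r h orbT.
by rewrite -mulr_natr; rewrite le_eqVlt; apply/orP; left; apply/eqP; field.
Qed.

Lemma cos_lb (x : R) : 0 <= x -> x <= 1 ->
  cos (1/2) ^+ 2 / 2 * x ^+ 2 <= 1 - cos x.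
Proof.
move=> x0 x1; rewrite one_sub_cos.
have hy : 0 <= x / 2 by rewrite divr_ge0.
have [c /andP[c0 cx] ->] := sin_mvt hy.
have hk : cos (1/2) <= cos c.
  apply: cos_anti => //; first by apply: (le_trans cx); rewrite ler_pM2r.
  have := pi_ge2 R; apply: le_trans; lra.
have hk0 := cos_half_gt0.
have : cos (1/2) ^+ 2 <= cos c ^+ 2.
  by rewrite ler_sqr // ?nnegrE ltW // (lt_le_trans hk0 hk).
move=> h2; rewrite exprMn.
have hx : 0 <= (x / 2) ^+ 2 by rewrite sqr_ge0.
have -> : cos (1/2) ^+ 2 / 2 * x ^+ 2 = (cos (1/2) ^+ 2 * (x / 2) ^+ 2) *+ 2.
  by field.
by rewrite lerMn2r ler_wpM2r // orbT.
Qed.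
End Trig.

Section Vec.
Set Implicit Arguments. Unset Strict Implicit.
Variables (R : realType) (d : nat).
Notation vec := 'rV[R]_d.
Implicit Types u w x y : vec.

Lemma dotvE u w : dotv u w = \sum_k u 0 k * w 0 k.
Proof. by rewrite /dotv !mxE; apply: eq_bigr => k _; rewrite mxE. Qed.

Lemma dotvC u w : dotv u w = dotv w u.
Proof. by rewrite !dotvE; apply: eq_bigr => k _; rewrite mulrC. Qed.

Lemma dotvDl u u' w : dotv (u + u') w = dotv u w + dotv u' w.
Proof. by rewrite !dotvE -big_split; apply: eq_bigr => k _; rewrite mxE mulrDl. Qed.

Lemma dotvZl a u w : dotv (a *: u) w = a * dotv u w.
Proof. by rewrite !dotvE mulr_sumr; apply: eq_bigr => k _; rewrite mxE mulrA. Qed.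

Lemma dotvNl u w : dotv (- u) w = - dotv u w.
Proof. by rewrite -scaleN1r dotvZl mulN1r. Qed.

Lemma dotvBl u u' w : dotv (u - u') w = dotv u w - dotv u' w.
Proof. by rewrite dotvDl dotvNl. Qed.

Lemma dotvDr u w w' : dotv u (w + w') = dotv u w + dotv u w'.
Proof. by rewrite dotvC dotvDl !(dotvC _ u). Qed.

Lemma dotvZr a u w : dotv u (a *: w) = a * dotv u w.
Proof. by rewrite dotvC dotvZl dotvC. Qed.

Lemma dotvBr u w w' : dotv u (w - w') = dotv u w - dotv u w'.
Proof. by rewrite dotvC dotvBl !(dotvC _ u). Qed.

Lemma dotv0l w : dotv 0 w = 0.
Proof. by rewrite dotvE big1 // => k _; rewrite mxE mul0r. Qed.

Lemma dotv0r w : dotv w 0 = 0.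
Proof. by rewrite dotvC dotv0l. Qed.

Lemma dotv_ge0 u : 0 <= dotv u u.
Proof. by rewrite dotvE sumr_ge0 // => k _; rewrite -expr2 sqr_ge0. Qed.

Lemma dotv_eq0 u : dotv u u = 0 -> u = 0.
Proof.
rewrite dotvE => /eqP; rewrite psumr_eq0 => [/allP H|k _]; last by rewrite -expr2 sqr_ge0.
apply/rowP => k; rewrite mxE; apply/eqP.
by have := H k (mem_index_enum _); rewrite /= -expr2 sqrf_eq0.
Qed.

Lemma dotv_gt0 u : u != 0 -> 0 < dotv u u.
Proof.
move=> u0; rewrite lt_def dotv_ge0 andbT; apply/eqP => /dotv_eq0 h.
by rewrite h eqxx in u0.
Qed.

Lemma normv_sqr u : normv u ^+ 2 = dotv u u.
Proof. by rewrite /normv sqr_sqrtr // dotv_ge0. Qed.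

Lemma normv_ge0 u : 0 <= normv u.
Proof. exact: sqrtr_ge0. Qed.

Lemma CS u w : dotv u w ^+ 2 <= dotv u u * dotv w w.
Proof.
have [->|w0] := eqVneq w 0; first by rewrite dotv0r dotv0l expr0n /= mulr0.
have hw := dotv_gt0 w0.
have := dotv_ge0 (dotv w w *: u - dotv u w *: w).
rewrite !(dotvBl, dotvBr, dotvZl, dotvZr) (dotvC w u) => h.
rewrite -(ler_pM2l hw).
move: h; set a := dotv w w; set b := dotv u w; set c := dotv u u => h.
have : 0 <= a * (a * c - b ^+ 2).
  apply: (le_trans h); rewrite le_eqVlt; apply/orP; left; apply/eqP; ring.
by rewrite pmulr_rge0 // subr_ge0 => h2; rewrite ler_pM2l // mulrC.
Qed.

Lemma N_add_le u w : dotv (u + w) (u + w) <= 2 * (dotv u u + dotv w w).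
Proof.
have := dotv_ge0 (u - w).
rewrite !(dotvBl, dotvBr, dotvDl, dotvDr) (dotvC w u) => h.
rewrite -subr_ge0; apply: (le_trans h); rewrite le_eqVlt; apply/orP; left; apply/eqP; ring.
Qed.


Lemma normv_gt0 u : u != 0 -> 0 < normv u.
Proof. by move=> u0; rewrite /normv sqrtr_gt0 dotv_gt0. Qed.

Lemma dot_abs_le u w : `|dotv u w| <= normv u * normv w.
Proof.
rewrite -ler_sqr ?nnegrE ?mulr_ge0 ?normv_ge0 //.
by rewrite real_normK ?num_real // exprMn !normv_sqr CS.
Qed.

Lemma ratio_bound u w : u != 0 -> w != 0 ->
  -1 <= dotv u w / (normv u * normv w) <= 1.
Proof.
move=> u0 w0; have hp : 0 < normv u * normv w by rewrite mulr_gt0 ?normv_gt0.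
rewrite -ler_norml normrM normfV (gtr0_norm hp) ler_pdivrMr // mul1r.
exact: dot_abs_le.
Qed.

Lemma angle_lt_dot u w t : u != 0 -> w != 0 -> t <= pi ->
  vec_angle u w < t -> cos t < dotv u w / (normv u * normv w).
Proof.
move=> u0 w0 tpi; rewrite /vec_angle; set c := _ / _ => h.
have cb := ratio_bound u0 w0; rewrite -/c in cb.
have a0 := acos_ge0 cb; have api := acos_lepi cb.
have -> : c = cos (acos c) by rewrite acosK // in_itv /=.
rewrite ltr_cos // in_itv /= ?a0 ?api ?tpi //.
by rewrite (le_trans a0) // ltW.
Qed.

Lemma angle_le_dot u w t : 0 <= t -> t <= pi ->
  dotv u w / (normv u * normv w) <= 1 ->
  cos t <= dotv u w / (normv u * normv w) -> vec_angle u w <= t.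
Proof.
move=> t0 tpi; rewrite /vec_angle; set c := _ / _ => c1 ct.
have cb : -1 <= c <= 1 by rewrite c1 andbT (le_trans (cos_geN1 t)).
have a0 := acos_ge0 cb; have api := acos_lepi cb.
rewrite leNgt; apply/negP => h.
have : cos (acos c) < cos t by rewrite ltr_cos // in_itv /= ?a0 ?api ?t0.
by rewrite acosK ?in_itv //= ltNge ct.
Qed.


Lemma submxB m1 m2 (A B : 'M[R]_(m1, d)) (C : 'M[R]_(m2, d)) :
  (A <= C)%MS -> (B <= C)%MS -> (A - B <= C)%MS.
Proof. by move=> hA hB; rewrite addmx_sub // -scaleN1r scalemx_sub. Qed.

Lemma orthK m (W : 'M[R]_(m, d)) q y :
  (q <= kermx W^T)%MS -> (y <= W)%MS -> dotv q y = 0.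
Proof.
move=> /sub_kermxP hq /submxP [D ->].
by rewrite /dotv trmx_mul mulmxA hq mul0mx mxE.
Qed.

Lemma ker_dot z u : dotv z u = 0 -> (z <= kermx u^T)%MS.
Proof.
move=> h; apply/sub_kermxP; apply/matrixP => i k.
by rewrite !ord1 [RHS]mxE; exact: h.
Qed.

Lemma cap_rank0 m1 m2 (A : 'M[R]_(m1, d)) (B : 'M[R]_(m2, d)) :
  (forall x : vec, (x <= A)%MS -> (x <= B)%MS -> x = 0) ->
  \rank (A :&: B)%MS = 0%N.
Proof.
move=> H; apply/eqP; rewrite mxrank_eq0; apply/eqP/row_matrixP => i.
rewrite row0; apply: H.
- exact: submx_trans (row_sub i _) (capmxSl _ _).
- exact: submx_trans (row_sub i _) (capmxSr _ _).
Qed.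

Lemma decomp (W : 'M[R]_d) (v : vec) :
  exists u q, (u <= W)%MS /\ (q <= kermx W^T)%MS /\ v = u + q.
Proof.
have h0 : \rank (W :&: kermx W^T)%MS = 0%N.
  apply: cap_rank0 => x xW xK; apply: dotv_eq0.
  exact: (orthK xK xW).
have := mxrank_sum_cap W (kermx W^T); rewrite h0 addn0 mxrank_ker mxrank_tr.
rewrite subnKC ?rank_leq_col // => hf.
have : (v <= W + kermx W^T)%MS by apply: submx_full; rewrite /row_full hf.
case/sub_addsmxP => uu ->; exists (uu.1 *m W), (uu.2 *m kermx W^T).
by rewrite !submxMl.
Qed.

Local Open Scope ereal_scope.
Lemma angle_vp_lt x S (t e : R) : angle_vp x S <= t%:E -> (0 < e)%R ->
  exists w, diffset S w /\ w != 0%R /\ (vec_angle x w < t + e)%R.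
Proof.
move=> h e0.
have : angle_vp x S < (t + e)%:E.
  by apply: (le_lt_trans h); rewrite lte_fin ltrDl.
move/ereal_inf_lt => [y [w [Sw w0] <-]]; rewrite lte_fin => hw.
by exists w.
Qed.

Lemma angle_vp_le x S w (t : R) : diffset S w -> w != 0%R -> (vec_angle x w <= t)%R ->
  angle_vp x S <= t%:E.
Proof.
move=> Sw w0 h; apply: le_trans (_ : (vec_angle x w)%:E <= _); last by rewrite lee_fin.
by apply: ereal_inf_lbound; exists w.
Qed.
End Vec.

Lemma key_ineq (R : realFieldType) (a Nr eta : R) : 0 <= eta -> eta <= 1/2 ->
  Nr <= eta / 4 -> a ^+ 2 <= Nr ->
  (1 - eta) ^+ 2 * (1 - 2 * a + Nr) <= (1 - a) ^+ 2.
Proof.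
move=> e0 e1 hN ha.
have a12 : a <= 1/2 by nra.
have hD : 1/4 <= 1 - 2 * a + Nr by nra.
move: hD; set D := 1 - 2 * a + Nr => hD.
have h0 : 0 <= D * eta by nra.
have h1 : D * eta <= D * eta * (2 - eta).
  by move: h0; move: (D * eta) => De; nra.
have h2 : (1 - a) ^+ 2 = D - (Nr - a ^+ 2) by rewrite /D; ring.
rewrite h2.
have h3 : (1 - eta) ^+ 2 * D = D - D * eta * (2 - eta) by ring.
rewrite h3; nra.
Qed.

End Aux.
Import Aux.

Theorem lemma4 (R : realType) (d : nat) (alpha : R) :
  0 < alpha ->
  exists beta0 : R, 0 < beta0 /\
  forall beta : R, 0 < beta -> beta <= beta0 ->
  forall (m : nat) (Lam : 'I_m -> set 'rV[R]_d) (v : 'I_m -> 'rV[R]_d)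
         (b : 'rV[R]_d),
    (forall i, jplane d.-1 (Lam i)) ->
    (forall i, normv (v i) = 1 /\
               forall u, diffset (Lam i) u -> dotv (v i) u = 0) ->
    (forall i, Lam i b) ->
  forall (j : nat) (LB : set 'rV[R]_d),
    LB b -> flat_wrt j (beta ^+ j) v LB ->
    (forall j' : nat, (j' < j)%N ->
       ~ exists L' : set 'rV[R]_d, L' b /\ flat_wrt j' (beta ^+ j') v L') ->
  forall p : 'rV[R]_d, p != b ->
    (forall i, (angle_vp (b - p) (Lam i) <= (beta ^+ d)%:E)%E) ->
    (angle_vp (b - p) (perp_plane LB b) <= alpha%:E)%E.
Proof.
move=> alpha0.
pose a1 := Num.min alpha (1/2).
have a1pos : 0 < a1 by rewrite lt_min alpha0 /=; lra.
have a1le1 : a1 <= 1/2 by rewrite ge_min lexx orbT.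
have a1lea : a1 <= alpha by rewrite ge_min lexx.
have pih := pihalf_ge1 R.
have pi2 := pi_ge2 R.
pose kap := cos a1.
have kap0 : 0 < kap.
  by apply: cos_gt0_pihalf; apply/andP; split; lra.
have kap1 : kap < 1.
  by rewrite -(cos0 R) /kap ltr_cos ?in_itv /= ?lexx //; apply/andP; split; lra.
pose S2 := 1 - kap ^+ 2.
have S2pos : 0 < S2 by rewrite /S2 subr_gt0; nra.
have S2le1 : S2 <= 1 by rewrite /S2; nra.
pose k0 : R := cos (1/2) ^+ 2 / 2.
have hc12 := cos_half_gt0 R.
have hc12' : cos (1/2 : R) <= 1 := cos_le1 _.
have k0pos : 0 < k0 by rewrite /k0 divr_gt0 // exprn_gt0.
have k0le : k0 <= 1/2 by rewrite /k0 ler_pM2r //; nra.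
exists (Num.min (1/2) (k0 * S2 / 160)).
split; first by rewrite lt_min; apply/andP; split; [lra | rewrite divr_gt0 // mulr_gt0].
move=> beta b0 bb0 m Lam v b HLam Hv Hb j LB LBb [[a [W [rkW LBdef]]] Hflat] Hmin p pb Hang.
have hb12 : beta <= 1/2 by move: bb0; rewrite le_min => /andP[].
have hbk : beta <= k0 * S2 / 160 by move: bb0; rewrite le_min => /andP[].
have b1 : beta <= 1 by lra.
have bpow0 n : 0 <= beta ^+ n by rewrite exprn_ge0 // ltW.
have bpow1 n : beta ^+ n <= 1 by rewrite exprn_ile1 // ltW.
have [vv vvE] : {vv | vv = b - p} by exists (b - p).
rewrite -vvE in Hang *.
have vv0 : vv != 0 by rewrite vvE subr_eq0 eq_sym.
have Nvv := dotv_gt0 vv0.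
have jd : (j <= d)%N by rewrite -rkW rank_leq_col.
have dLB : forall w, diffset LB w -> (w <= W)%MS.
  move=> w [x [y [Lx [Ly ->]]]]; rewrite LBdef /= in Lx Ly.
  have -> : x - y = (x - a) - (y - a) by rewrite opprB addrA subrK.
  exact: submxB.
have [u [q [uW [qK vdec]]]] := decomp W vv.
have qW : forall y, (y <= W)%MS -> dotv q y = 0 by move=> y; exact: orthK.
have Nv : dotv vv vv = dotv u u + dotv q q.
  rewrite vdec !(dotvDl, dotvDr) (qW u uW) (dotvC u q) (qW u uW); ring.
have Nu0 := dotv_ge0 u.
have Nq0 := dotv_ge0 q.
case: (lerP (kap ^+ 2 * dotv vv vv) (dotv q q)) => hq.
  have q0 : q != 0.
    apply/eqP => q0; move: hq; rewrite q0 dotv0l; apply/negP; rewrite -ltNge.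
    by rewrite mulr_gt0 // exprn_gt0.
  apply: (angle_vp_le (w := q)) => //.
    exists (b + q), b; split.
      move=> u' /dLB u'W; rewrite [b + q]addrC addrK; exact: qW.
    split; last by rewrite [b + q]addrC addrK.
    by move=> u' _; rewrite subrr dotv0l.
  apply: (le_trans _ a1lea); apply: angle_le_dot; [lra | lra | |].
    by case/andP: (ratio_bound vv0 q0).
  have -> : dotv vv q = normv q ^+ 2.
    by rewrite normv_sqr vdec dotvDl dotvC (qW u uW) add0r.
  have nq := normv_gt0 q0; have nv := normv_gt0 vv0.
  rewrite expr2 invfM mulrA mulrAC mulfK ?gt_eqF //.
  rewrite ler_pdivlMr // -/kap.
  rewrite -(ler_sqr); last 2 first.
  - by rewrite nnegrE mulr_ge0 // ltW.
  - by rewrite nnegrE ltW.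
  by rewrite exprMn normv_sqr normv_sqr.
have NuS : S2 * dotv vv vv < dotv u u by rewrite /S2; nra.
have u0 : u != 0.
  apply/eqP => u0; move: NuS; rewrite u0 dotv0l; apply/negP; rewrite -leNgt.
  by rewrite ltW // mulr_gt0.
have Nupos := dotv_gt0 u0.
have j0 : (0 < j)%N.
  rewrite lt0n; apply/eqP => j0; move: rkW; rewrite j0 => /eqP; rewrite mxrank_eq0 => /eqP W0.
  by move: uW; rewrite W0 submx0 (negbTE u0).
exfalso; apply: (Hmin j.-1); first by rewrite prednK.
pose K' := kermx u^T.
pose W' := (W :&: K')%MS.
have rW' : \rank W' = j.-1.
  have d0 : (0 < d)%N by apply: leq_trans jd.
  have rK' : \rank K' = d.-1 by rewrite mxrank_ker mxrank_tr rank_rV u0 subn1.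
  have rWK : \rank (W + K')%MS = d.
    apply/eqP; rewrite eqn_leq rank_leq_col /=.
    have [hle heq] := mxrank_leqif_eq (addsmxSr W K').
    case: (boolP (K' == W + K')%MS) => hE.
      move: hE => /andP[_ hE].
      have uK : (u <= K')%MS.
        exact: submx_trans (submx_trans uW (addsmxSl W K')) hE.
      have := orthK uK (submx_refl u) => /dotv_eq0 h.
      by rewrite h eqxx in u0.
    move: heq; rewrite (negbTE hE) => /negbT; rewrite rK' => hne.
    move: hle; rewrite rK' => hle.
    move: hle hne d0; move: (\rank (W + K')%MS) => r; clear; lia.
  have := mxrank_sum_cap W K'; rewrite rWK rK' rkW -/W'.
  move: d0 jd j0; move: (\rank W') => r; clear; lia.
exists [set y | (y - b <= W')%MS].
split; first by rewrite /= subrr sub0mx.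
split; first by exists b, W'.
move=> i.
pose x := beta ^+ j.-1.
pose B := beta ^+ j.
have BE : B = beta * x by rewrite /B /x -exprS prednK.
have x0 : 0 <= x := bpow0 _.
have x1 : x <= 1 := bpow1 _.
have B0 : 0 <= B := bpow0 _.
have Bx : B <= x by rewrite BE; clear - b0 b1 x0; nra.
have [nvi vperp] := Hv i.
have Nvi : dotv (v i) (v i) = 1 by rewrite -normv_sqr nvi expr1n.
have vi0 : v i != 0 by apply/eqP => h; move: Nvi; rewrite h dotv0l => /esym/eqP; rewrite oner_eq0.
have Bpos : 0 < B by rewrite exprn_gt0.
have [w0 [w0LB [w00 hw0]]] := angle_vp_lt (Hflat i) Bpos.
have h2B : beta ^+ j + B <= pi.
  have h := bpow1 j; rewrite -/B in h *; clear - h pi2; lra.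
have := angle_lt_dot vi0 w00 h2B hw0; rewrite nvi mul1r -/B => hcw0.
have nw0 := normv_gt0 w00.
pose w := (normv w0)^-1 *: w0.
have wW : (w <= W)%MS by apply: scalemx_sub; apply: dLB.
have Nw : dotv w w = 1.
  rewrite /w dotvZl dotvZr -normv_sqr; field; by rewrite gt_eqF.
have cwE : dotv (v i) w = dotv (v i) w0 / normv w0 by rewrite /w dotvZr mulrC.
have hcw : 1 - 2 * B ^+ 2 < dotv (v i) w.
  rewrite cwE; apply: le_lt_trans hcw0.
  have h := cos_ub (addr_ge0 B0 B0); clear - h; lra.
pose e := v i - w.
have Ne : dotv e e <= 4 * B ^+ 2.
  rewrite /e !(dotvBl, dotvBr) Nvi Nw (dotvC w (v i)); clear - hcw; lra.
pose D := beta ^+ d.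
have Dpos : 0 < D by rewrite exprn_gt0.
have DB : D <= B by rewrite /D /B ler_wiXn2l // ltW.
have [w1 [w1L [w10 hw1]]] := angle_vp_lt (Hang i) Dpos.
have h2D : beta ^+ d + D <= pi.
  have h := bpow1 d; rewrite -/D in h *; clear - h pi2; lra.
have := angle_lt_dot vv0 w10 h2D hw1; rewrite -/D => hc1.
have vw1 : dotv (v i) w1 = 0 := vperp _ w1L.
pose t := dotv vv (v i).
have ht : t ^+ 2 <= 4 * B ^+ 2 * dotv vv vv.
  pose r := vv - t *: v i.
  have rw1 : dotv r w1 = dotv vv w1 by rewrite /r dotvBl dotvZl vw1 mulr0 subr0.
  have Nr : dotv r r = dotv vv vv - t ^+ 2.
    rewrite /r !(dotvBl, dotvBr, dotvZl, dotvZr) Nvi (dotvC (v i) vv) -/t; ring.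
  have CSr := CS r w1; rewrite rw1 Nr in CSr.
  have hc := cos_ub (addr_ge0 (ltW Dpos) (ltW Dpos)).
  have hcle := cos_le1 (D + D).
  set c1 := cos (D + D) in hc1 hc hcle.
  have nv := normv_gt0 vv0; have nw := normv_gt0 w10.
  set nvv := normv vv in hc1 nv; set nw1 := normv w1 in hc1 nw.
  have D12 : D <= 1/2 by rewrite BE in DB; clear - DB b0 b1 hb12 x0 x1 Dpos; nra.
  have c1pos : 1/2 <= c1 by clear - hc D12 Dpos; nra.
  have P0 : 0 < nvv * nw1 by rewrite mulr_gt0.
  have hg : c1 * (nvv * nw1) < dotv vv w1 by rewrite -ltr_pdivlMr.
  set g := dotv vv w1 in hg CSr.
  have hg2 : (c1 * (nvv * nw1)) ^+ 2 < g ^+ 2.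
    have cP0 : 0 <= c1 * (nvv * nw1) by rewrite mulr_ge0 // ?ltW //; clear - c1pos; lra.
    clear - cP0 hg; nra.
  rewrite -!normv_sqr -/nvv -/nw1 in CSr *.
  have hn2 : 0 < nw1 ^+ 2 by rewrite exprn_gt0.
  have : c1 ^+ 2 * nvv ^+ 2 < nvv ^+ 2 - t ^+ 2.
    rewrite -(ltr_pM2r hn2); apply: lt_le_trans CSr.
    by apply: le_lt_trans hg2; rewrite le_eqVlt; apply/orP; left; apply/eqP; ring.
  move=> h3.
  have hD : 1 - c1 ^+ 2 <= 4 * B ^+ 2.
    have hDB : D ^+ 2 <= B ^+ 2 by clear - DB Dpos; nra.
    clear - hDB hc hcle c1pos; nra.
  have hv2 : 0 <= nvv ^+ 2 by rewrite sqr_ge0.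
  clear - h3 hD hv2 c1pos; nra.
have viE : v i = w + e by rewrite /e addrC subrK.
pose uw := dotv u w.
have uwE : uw = t - dotv vv e.
  by rewrite /uw /t viE dotvDr vdec dotvDl (qW w wW) addr0 addrK.
have hve := CS vv e.
have huw : uw ^+ 2 <= 16 * B ^+ 2 * dotv vv vv.
  rewrite uwE.
  have Nvv0 := ltW Nvv.
  have h1 : dotv vv e ^+ 2 <= 4 * B ^+ 2 * dotv vv vv.
    by apply: (le_trans hve); rewrite mulrC ler_wpM2r.
  clear - h1 ht Nvv0; nra.
pose lam := uw / dotv u u.
pose z := w - lam *: u.
have zW' : (z <= W')%MS.
  rewrite sub_capmx; apply/andP; split.
    by apply: submxB => //; apply: scalemx_sub.
  apply: ker_dot; rewrite /z dotvBl dotvZl (dotvC w u) -/uw /lam.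
  by rewrite mulfVK ?subrr // gt_eqF.
have [r rdef] : {r | r = v i - z} by exists (v i - z).
have rE : r = e + lam *: u by rewrite rdef /z /e opprB addrA addrAC.
have Nlu : dotv (lam *: u) (lam *: u) * S2 <= 16 * B ^+ 2.
  rewrite dotvZl dotvZr /lam.
  have -> : uw / dotv u u * (uw / dotv u u * dotv u u) = uw ^+ 2 / dotv u u.
    by field; rewrite gt_eqF.
  rewrite mulrAC ler_pdivrMr //.
  apply: le_trans (_ : 16 * B ^+ 2 * dotv vv vv * S2 <= _).
    by rewrite ler_wpM2r // ltW.
  rewrite -mulrA ler_wpM2l ?mulr_ge0 // ?sqr_ge0 // mulrC; exact: ltW.
have Nr : dotv r r * S2 <= 40 * B ^+ 2.
  rewrite rE; have := N_add_le e (lam *: u).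
  have := dotv_ge0 (lam *: u).
  move=> h1 h2; clear - h1 h2 Nlu Ne S2pos S2le1 B0; nra.
have Nrk : dotv r r <= k0 * x ^+ 2 / 4.
  rewrite BE in Nr.
  have hb2 : 160 * beta <= k0 * S2 by move: hbk; rewrite ler_pdivlMr // => h; clear - h; lra.
  have Nr0 := dotv_ge0 r.
  rewrite -(ler_pM2r S2pos).
  apply: (le_trans Nr).
  have hx2 : 0 <= x ^+ 2 by rewrite sqr_ge0.
  have hb3 : 160 * beta ^+ 2 <= k0 * S2 by clear - hb2 b0 b1; nra.
  rewrite exprMn; clear - hb3 hx2; nra.
have zE : z = v i - r by rewrite rdef opprB addrC subrK.
pose a0 := dotv (v i) r.
have ha : a0 ^+ 2 <= dotv r r by have := CS (v i) r; rewrite Nvi mul1r.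
have vz : dotv (v i) z = 1 - a0 by rewrite zE dotvBr Nvi.
have Nz : dotv z z = 1 - 2 * a0 + dotv r r.
  rewrite zE !(dotvBl, dotvBr) Nvi (dotvC r (v i)) -/a0; ring.
have eta0 : 0 <= k0 * x ^+ 2 by rewrite mulr_ge0 ?sqr_ge0 // ltW.
have eta1 : k0 * x ^+ 2 <= 1/2.
  have hx : x ^+ 2 <= 1 by rewrite exprn_ile1.
  have hx' : 0 <= x ^+ 2 := sqr_ge0 x.
  clear - hx hx' k0le k0pos; nra.
have hkey := @key_ineq R a0 (dotv r r) (k0 * x ^+ 2) eta0 eta1 Nrk ha.
have a12 : a0 <= 1/2 by clear - ha Nrk eta1 eta0; nra.
have z0 : z != 0.
  by apply/eqP => z0; move: vz; rewrite z0 dotv0r => h; clear - h a12; lra.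
have hcx := cos_lb x0 x1; rewrite -/k0 in hcx.
apply: (angle_vp_le (w := z)).
- exists (z + b), b; split; first by rewrite /= addrK.
  split; first by rewrite /= subrr sub0mx.
  by rewrite addrK.
- exact: z0.
apply: angle_le_dot => //; try rewrite -/x; first by clear - x1 pi2; lra.
  by case/andP: (ratio_bound vi0 z0).
rewrite nvi mul1r vz.
have nz := normv_gt0 z0.
rewrite ler_pdivlMr //.
have -> : cos x = 1 - (1 - cos x) by ring.
apply: le_trans (_ : (1 - k0 * x ^+ 2) * normv z <= _).
  by apply: ler_wpM2r; [exact: ltW | clear - hcx; lra].
rewrite -ler_sqr ?nnegrE; last 2 first.
- by rewrite mulr_ge0 ?ltW //; clear - eta1; lra.
- clear - a12; lra.
by rewrite exprMn normv_sqr Nz.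
Qed.
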